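(* For every $\alpha>0$, the Alexander operator $C_0(f)(z)=\int_0^z\frac{f(w)}{w}\,dw$ is a bounded linear operator from $(\mathcal{B}_\alpha^0,\|\cdot\|_{\mathcal{B}_\alpha})$ to itself, and its operator norm equals $1$.
   Context: $\mathbb{D}=\{z\in\mathbb{C}:|z|<1\}$. For $\alpha>0$, the $\alpha$-Bloch space $\mathcal{B}_\alpha$ is the space of analytic functions $f$ on $\mathbb{D}$ with $\|f\|_{\mathcal{B}_\alpha}:=\sup_{z\in\mathbb{D}}(1-|z|^2)^\alpha|f'(z)|<\infty$. $\mathcal{B}_\alpha^0=\{f\in\mathcal{B}_\alpha: f(0)=0\}$, normed by $\|\cdot\|_{\mathcal{B}_\alpha}$. *)

(* Defs.v *)
From Stdlib Require Import Reals.
From Stdlib Require Import ClassicalEpsilon.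
From Coquelicot Require Import Coquelicot.
Open Scope R_scope.

Definition in_disc (z : C) : Prop := Cmod z < 1.

Definition cderivable_at (f : C -> C) (z l : C) : Prop :=
  @is_derive C_AbsRing C_NormedModule f z l.

Definition analytic_on_disc (f : C -> C) : Prop :=
  forall z : C, in_disc z -> exists l : C, cderivable_at f z l.

Definition cderiv (f : C -> C) (z : C) : C :=
  epsilon (inhabits (RtoC 0)) (fun l : C => cderivable_at f z l).

Definition bloch_weight (alpha : R) (f : C -> C) (z : C) : R :=
  Rpower (1 - Cmod z ^ 2) alpha * Cmod (cderiv f z).

Definition in_Bloch (alpha : R) (f : C -> C) : Prop :=
  analytic_on_disc f /\
  exists M : R, forall z : C, in_disc z -> bloch_weight alpha f z <= M.

Definition in_Bloch0 (alpha : R) (f : C -> C) : Prop :=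
  in_Bloch alpha f /\ f 0%C = 0%C.

Definition bloch_norm (alpha : R) (f : C -> C) : R :=
  real (Lub_Rbar (fun r : R => exists z : C, in_disc z /\ r = bloch_weight alpha f z)).

(* Alexander operator: C_0(f)(z) = \int_0^z f(w)/w dw, the integral taken
   along the segment w = t z, t in [0,1] (dw = z dt). *)
Definition Alexander (f : C -> C) (z : C) : C :=
  @RInt C_R_CompleteNormedModule
    (fun t : R => (f (RtoC t * z)%C / (RtoC t * z)%C * z)%C) 0 1.

(* Main.v *)
Require Import Defs.
From Stdlib Require Import Reals Lra Psatz ClassicalEpsilon FunctionalExtensionality.
From Coquelicot Require Import Coquelicot.
Open Scope R_scope.

Definition cdiff (f : C -> C) (z l : C) : Prop :=
  forall eps, 0 < eps -> exists del, 0 < del /\ forall w, Cmod (w - z) < del ->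
    Cmod (f w - f z - l * (w - z)) <= eps * Cmod (w - z).

Lemma cdiff_iff f z l : cderivable_at f z l <-> cdiff f z l.
Proof.
  split.
  - intros [_ H] eps Heps.
    specialize (H z (fun P HP => HP) (mkposreal eps Heps)).
    destruct H as [d Hd]. exists d. split; [apply cond_pos|].
    intros w Hw. specialize (Hd w Hw). simpl in Hd.
    replace (l * (w - z))%C with ((w - z) * l)%C by ring. exact Hd.
  - intros H. split. apply is_linear_scal_l.
    intros x Hx. apply (is_filter_lim_locally_unique (V:=AbsRing_NormedModule C_AbsRing)) in Hx. subst x.
    intros eps.
    destruct (H eps (cond_pos eps)) as [d [Hd0 Hd]].
    exists (mkposreal _ Hd0). intros y Hy.
    specialize (Hd y Hy). simpl.
    change (Cmod (f y - f z - (y - z) * l)%C <= eps * Cmod (y - z)%C).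
    replace ((y - z) * l)%C with (l * (y - z))%C by ring. exact Hd.
Qed.

Lemma normCR (z : C) : norm (K:=R_AbsRing) (V:=C_R_NormedModule) z = Cmod z.
Proof.
  destruct z as [x y]. unfold norm; simpl. unfold prod_norm, Cmod; simpl.
  unfold norm; simpl. unfold abs; simpl. f_equal; rewrite !Rmult_1_r, <- !Rabs_mult, !Rabs_pos_eq; nra.
Qed.

Lemma scalCR (r : R) (z : C) : scal (V:=C_R_NormedModule) r z = (RtoC r * z)%C.
Proof.
  destruct z as [x y]. apply injective_projections; simpl; unfold scal; simpl; unfold mult; simpl; ring.
Qed.

Ltac ceq := match goal with |- ?A = ?B => change (@eq C A B) end.

Definition ccont (G : C -> C) (w : C) : Prop :=
  forall eps, 0 < eps -> exists del, 0 < del /\ forall v, Cmod (v - w) < del ->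
    Cmod (G v - G w) < eps.

Definition segf (G : C -> C) (x y : C) (t : R) : C := (G (x + RtoC t * (y - x)) * (y - x))%C.
Definition seg (G : C -> C) (x y : C) : C := @RInt C_R_CompleteNormedModule (segf G x y) 0 1.

Lemma Cmod_seg_diff (x y : C) (s t : R) :
  Cmod ((x + RtoC s * (y - x)) - (x + RtoC t * (y - x)))%C = Rabs (s - t) * Cmod (y - x).
Proof.
  replace ((x + RtoC s * (y - x)) - (x + RtoC t * (y - x)))%C with (RtoC (s - t) * (y - x))%C.
  - rewrite Cmod_mult, Cmod_R. reflexivity.
  - rewrite RtoC_minus. ring.
Qed.

Lemma cont_param (G : C -> C) (p d : C) (t : R) :
  ccont G (p + RtoC t * d)%C ->
  continuous (U:=C_R_CompleteNormedModule) (fun s => (G (p + RtoC s * d) * d)%C) t.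
Proof.
  intros Hc. apply filterlim_locally. intros eps.
  assert (Hd : 0 < Cmod d + 1) by (generalize (Cmod_ge_0 d); lra).
  destruct (Hc (eps / (Cmod d + 1))) as [del [Hdel H]].
  { apply Rdiv_lt_0_compat; [apply cond_pos | lra]. }
  assert (Hp : 0 < del / (Cmod d + 1)) by (apply Rdiv_lt_0_compat; lra).
  exists (mkposreal _ Hp). intros s Hs.
  apply (norm_compat1 (V:=C_R_NormedModule)). rewrite normCR.
  change (Cmod (G (p + RtoC s * d) * d - G (p + RtoC t * d) * d)%C < eps).
  replace (G (p + RtoC s * d) * d - G (p + RtoC t * d) * d)%C
    with ((G (p + RtoC s * d) - G (p + RtoC t * d)) * d)%C by ring.
  rewrite Cmod_mult.
  assert (Hs' : Rabs (s - t) < del / (Cmod d + 1)) by exact Hs.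
  assert (Hv : Cmod ((p + RtoC s * d) - (p + RtoC t * d))%C < del).
  { replace ((p + RtoC s * d) - (p + RtoC t * d))%C with (RtoC (s - t) * d)%C
      by (rewrite RtoC_minus; ring).
    rewrite Cmod_mult, Cmod_R.
    apply Rle_lt_trans with (Rabs (s - t) * (Cmod d + 1)).
    - apply Rmult_le_compat_l; [apply Rabs_pos | lra].
    - apply Rlt_le_trans with (del / (Cmod d + 1) * (Cmod d + 1)).
      + apply Rmult_lt_compat_r; lra.
      + right; field; lra. }
  specialize (H _ Hv).
  apply Rle_lt_trans with (eps / (Cmod d + 1) * Cmod d).
  - apply Rmult_le_compat_r; [apply Cmod_ge_0 | lra].
  - assert (0 < eps) by apply cond_pos.
    apply Rlt_le_trans with (eps / (Cmod d + 1) * (Cmod d + 1)).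
    + apply Rmult_lt_compat_l; [apply Rdiv_lt_0_compat|]; lra.
    + right; field; lra.
Qed.

Lemma ex_RInt_param (G : C -> C) (p d : C) (a b : R) :
  (forall s, Rmin a b <= s <= Rmax a b -> ccont G (p + RtoC s * d)%C) ->
  ex_RInt (V:=C_R_CompleteNormedModule) (fun s => (G (p + RtoC s * d) * d)%C) a b.
Proof.
  intros H. apply ex_RInt_continuous. intros s Hs. apply cont_param. apply H. exact Hs.
Qed.

Lemma ex_seg (G : C -> C) (x y : C) :
  (forall t, 0 <= t <= 1 -> ccont G (x + RtoC t * (y - x))%C) ->
  ex_RInt (V:=C_R_CompleteNormedModule) (segf G x y) 0 1.
Proof.
  intros H. apply ex_RInt_param. rewrite Rmin_left, Rmax_right by lra. exact H.
Qed.

Lemma seg_param (G : C -> C) (p d : C) (a b : R) (x y : C) :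
  x = (p + RtoC a * d)%C -> y = (p + RtoC b * d)%C ->
  (forall s, Rmin a b <= s <= Rmax a b -> ccont G (p + RtoC s * d)%C) ->
  seg G x y = @RInt C_R_CompleteNormedModule (fun s => (G (p + RtoC s * d) * d)%C) a b.
Proof.
  intros -> -> Hc. unfold seg.
  transitivity (@RInt C_R_CompleteNormedModule
     (fun t => scal (b - a) ((fun s => (G (p + RtoC s * d) * d)%C) ((b - a) * t + a))) 0 1).
  - apply (RInt_ext (V:=C_R_CompleteNormedModule)). intros t _. unfold segf. rewrite scalCR.
    replace (p + RtoC a * d + RtoC t * (p + RtoC b * d - (p + RtoC a * d)))%C
      with (p + RtoC ((b - a) * t + a) * d)%C
      by (rewrite RtoC_plus, RtoC_mult, RtoC_minus; ring).
    match goal with |- ?A = ?B => change (@eq C A B) end. rewrite RtoC_minus; ring.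
  - etransitivity.
    apply (RInt_comp_lin (V:=C_R_CompleteNormedModule) (fun s => (G (p + RtoC s * d) * d)%C) (b - a) a 0 1).
    + replace ((b - a) * 0 + a) with a by ring. replace ((b - a) * 1 + a) with b by ring.
      apply ex_RInt_param. exact Hc.
    + replace ((b - a) * 0 + a) with a by ring. replace ((b - a) * 1 + a) with b by ring.
      reflexivity.
Qed.

Lemma minmax01 a b s : 0 <= a <= 1 -> 0 <= b <= 1 -> Rmin a b <= s <= Rmax a b -> 0 <= s <= 1.
Proof.
  intros Ha Hb Hs. unfold Rmin, Rmax in Hs. destruct (Rle_dec a b); lra.
Qed.

Lemma seg_chasles (G : C -> C) (p d : C) (a b c : R) :
  0 <= a <= 1 -> 0 <= b <= 1 -> 0 <= c <= 1 ->
  (forall s, 0 <= s <= 1 -> ccont G (p + RtoC s * d)%C) ->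
  (seg G (p + RtoC a * d) (p + RtoC b * d) + seg G (p + RtoC b * d) (p + RtoC c * d))%C
  = seg G (p + RtoC a * d) (p + RtoC c * d).
Proof.
  intros Ha Hb Hc H.
  rewrite (seg_param G p d a b _ _ eq_refl eq_refl), (seg_param G p d b c _ _ eq_refl eq_refl),
    (seg_param G p d a c _ _ eq_refl eq_refl).
  - apply (RInt_Chasles (V:=C_R_CompleteNormedModule)); apply ex_RInt_param; intros s Hs; apply H.
    + apply (minmax01 a b); auto.
    + apply (minmax01 b c); auto.
  - intros s Hs; apply H; apply (minmax01 a c); auto.
  - intros s Hs; apply H; apply (minmax01 b c); auto.
  - intros s Hs; apply H; apply (minmax01 a b); auto.
Qed.

Lemma seg_swap (G : C -> C) (p d : C) (a b : R) :
  0 <= a <= 1 -> 0 <= b <= 1 ->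
  (forall s, 0 <= s <= 1 -> ccont G (p + RtoC s * d)%C) ->
  seg G (p + RtoC b * d) (p + RtoC a * d) = (- seg G (p + RtoC a * d) (p + RtoC b * d))%C.
Proof.
  intros Ha Hb H.
  rewrite (seg_param G p d b a _ _ eq_refl eq_refl), (seg_param G p d a b _ _ eq_refl eq_refl).
  - rewrite <- (opp_RInt_swap (V:=C_R_CompleteNormedModule)). reflexivity.
    apply ex_RInt_param; intros s Hs; apply H. apply (minmax01 a b); auto.
  - intros s Hs; apply H; apply (minmax01 a b); auto.
  - intros s Hs; apply H; apply (minmax01 b a); auto.
Qed.

Lemma seg_bound (G : C -> C) (x y : C) (B : R) :
  (forall t, 0 <= t <= 1 -> ccont G (x + RtoC t * (y - x))%C) ->
  (forall t, 0 <= t <= 1 -> Cmod (G (x + RtoC t * (y - x))%C) <= B) ->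
  Cmod (seg G x y) <= Cmod (y - x) * B.
Proof.
  intros Hc HB. rewrite <- normCR.
  apply (norm_RInt_le (V:=C_R_NormedModule) (segf G x y) (fun _ => Cmod (y - x) * B) 0 1).
  - lra.
  - intros t Ht. rewrite normCR. unfold segf. rewrite Cmod_mult, Rmult_comm.
    apply Rmult_le_compat_l; [apply Cmod_ge_0 | apply HB; exact Ht].
  - apply (RInt_correct (V:=C_R_CompleteNormedModule)). apply ex_seg. exact Hc.
  - set (c := Cmod (y - x) * B).
    pose proof (is_RInt_const (V:=R_NormedModule) 0 1 c) as Hi.
    change (scal (1 - 0) c) with ((1 - 0) * c) in Hi.
    replace ((1 - 0) * c) with c in Hi by ring. exact Hi.
Qed.

Lemma seg_minus (G H : C -> C) (x y : C) :
  (forall t, 0 <= t <= 1 -> ccont G (x + RtoC t * (y - x))%C) ->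
  (forall t, 0 <= t <= 1 -> ccont H (x + RtoC t * (y - x))%C) ->
  seg (fun w => G w - H w)%C x y = (seg G x y - seg H x y)%C.
Proof.
  intros HG HH. unfold seg.
  rewrite <- (RInt_minus (V:=C_R_CompleteNormedModule)); try (apply ex_seg; assumption).
  apply (RInt_ext (V:=C_R_CompleteNormedModule)). intros t _. unfold segf. change (minus ?a ?b) with (a - b)%C. ceq. ring.
Qed.

Lemma seg_const (c x y : C) : seg (fun _ => c) x y = (c * (y - x))%C.
Proof.
  unfold seg, segf. rewrite RInt_const. rewrite scalCR. replace (1 - 0) with 1 by ring. ring.
Qed.

Lemma is_RInt_lin (K : C) :
  is_RInt (V:=C_R_CompleteNormedModule) (fun t => (RtoC t * K)%C) 0 1 (RtoC (/2) * K)%C.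
Proof.
  assert (H := is_RInt_scal_derive (V:=C_R_CompleteNormedModule) (fun t => t * t / 2) (fun _ => K)
     (fun t => t) (fun _ => RtoC 0) 0 1).
  assert (H' : is_RInt (V:=C_R_CompleteNormedModule)
     (fun t : R => plus (scal t K) (scal (t * t / 2) (RtoC 0))) 0 1
     (minus (scal (1 * 1 / 2) K) (scal (0 * 0 / 2) K))).
  { apply H.
    - intros t _. apply (is_derive_ext (fun t => t * t / 2)); [reflexivity|].
      auto_derive; [exact I | field].
    - intros t _. apply (is_derive_const (V:=C_R_NormedModule)).
    - intros t _. apply continuous_id.
    - intros t _. apply continuous_const. }
  eapply is_RInt_ext; [| replace (RtoC (/ 2) * K)%C with
     (minus (scal (1 * 1 / 2) K) (scal (0 * 0 / 2) K)); [exact H'|]].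
  - intros t _. cbv beta. destruct K as [k1 k2].
    apply injective_projections; simpl; unfold plus, scal, mult, opp; simpl; unfold plus, scal, mult, opp; simpl; field.
  - destruct K as [k1 k2].
    apply injective_projections; simpl; unfold minus, plus, scal, mult, opp; simpl; unfold plus, scal, mult, opp; simpl; field.
Qed.

Lemma seg_affine (c l q x y : C) :
  seg (fun w => c + l * (w - q))%C x y
  = (c * (y - x) + l * ((y - q) * (y - q) - (x - q) * (x - q)) * RtoC (/2))%C.
Proof.
  unfold seg. apply (is_RInt_unique (V:=C_R_CompleteNormedModule)).
  set (K0 := ((c + l * (x - q)) * (y - x))%C). set (K1 := (l * (y - x) * (y - x))%C).
  assert (H := is_RInt_plus (V:=C_R_CompleteNormedModule) _ _ 0 1 _ _
     (is_RInt_const (V:=C_R_CompleteNormedModule) 0 1 K0) (is_RInt_lin K1)).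
  eapply is_RInt_ext; [| replace (c * (y - x) + l * ((y - q) * (y - q) - (x - q) * (x - q)) * RtoC (/2))%C
     with (plus (scal (1 - 0) K0) (RtoC (/ 2) * K1)%C); [exact H|]].
  - intros t _. cbv beta. unfold segf, K0, K1. change (plus ?a ?b) with (a + b)%C. ceq. ring.
  - change (plus ?a ?b) with (a + b)%C. rewrite scalCR. unfold K0, K1. ceq.
    rewrite RtoC_inv by lra. rewrite RtoC_minus. field.
Qed.

Lemma Cmod_convex (x y : C) (r t : R) :
  Cmod x <= r -> Cmod y <= r -> 0 <= t <= 1 -> Cmod (x + RtoC t * (y - x))%C <= r.
Proof.
  intros Hx Hy Ht.
  replace (x + RtoC t * (y - x))%C with (RtoC (1 - t) * x + RtoC t * y)%C
    by (rewrite RtoC_minus; ring).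
  eapply Rle_trans; [apply Cmod_triangle|].
  rewrite !Cmod_mult, !Cmod_R, !Rabs_pos_eq by lra. nra.
Qed.

Lemma segc (G : C -> C) (r : R) (x y : C) :
  (forall w, Cmod w < 1 -> ccont G w) -> r < 1 -> Cmod x <= r -> Cmod y <= r ->
  forall t, 0 <= t <= 1 -> ccont G (x + RtoC t * (y - x))%C.
Proof.
  intros HG Hr Hx Hy t Ht. apply HG. eapply Rle_lt_trans; [apply (Cmod_convex x y r t)|]; auto.
Qed.

Lemma seg_anti (G : C -> C) (r : R) (x y : C) :
  (forall w, Cmod w < 1 -> ccont G w) -> r < 1 -> Cmod x <= r -> Cmod y <= r ->
  seg G y x = (- seg G x y)%C.
Proof.
  intros HG Hr Hx Hy.
  assert (E := seg_swap G x (y - x) 0 1 ltac:(lra) ltac:(lra) (segc G r x y HG Hr Hx Hy)).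
  replace (x + RtoC 0 * (y - x))%C with x in E by ring.
  replace (x + RtoC 1 * (y - x))%C with y in E by ring.
  exact E.
Qed.

Definition mid (x y : C) : C := (x + RtoC (/2) * (y - x))%C.

Lemma Cmod_mid (x y : C) (r : R) : Cmod x <= r -> Cmod y <= r -> Cmod (mid x y) <= r.
Proof. intros; apply Cmod_convex; auto; lra. Qed.

Lemma seg_split (G : C -> C) (r : R) (x y : C) :
  (forall w, Cmod w < 1 -> ccont G w) -> r < 1 -> Cmod x <= r -> Cmod y <= r ->
  seg G x y = (seg G x (mid x y) + seg G (mid x y) y)%C.
Proof.
  intros HG Hr Hx Hy.
  assert (E := seg_chasles G x (y - x) 0 (/2) 1 ltac:(lra) ltac:(lra) ltac:(lra) (segc G r x y HG Hr Hx Hy)).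
  replace (x + RtoC 0 * (y - x))%C with x in E by ring.
  replace (x + RtoC 1 * (y - x))%C with y in E by ring.
  rewrite <- E. reflexivity.
Qed.

Record tri3 := mk3 { va : C; vb : C; vc : C }.

Definition tri (G : C -> C) (T : tri3) : C :=
  (seg G (va T) (vb T) + seg G (vb T) (vc T) + seg G (vc T) (va T))%C.

Definition perim (T : tri3) : R :=
  Cmod (vb T - va T) + Cmod (vc T - vb T) + Cmod (va T - vc T).

Definition ch1 T := mk3 (va T) (mid (va T) (vb T)) (mid (vc T) (va T)).
Definition ch2 T := mk3 (mid (va T) (vb T)) (vb T) (mid (vb T) (vc T)).
Definition ch3 T := mk3 (mid (vc T) (va T)) (mid (vb T) (vc T)) (vc T).
Definition ch4 T := mk3 (mid (va T) (vb T)) (mid (vb T) (vc T)) (mid (vc T) (va T)).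

Definition inr3 (r : R) (T : tri3) : Prop := Cmod (va T) <= r /\ Cmod (vb T) <= r /\ Cmod (vc T) <= r.

Lemma tri_decomp (G : C -> C) (r : R) (T : tri3) :
  (forall w, Cmod w < 1 -> ccont G w) -> r < 1 -> inr3 r T ->
  tri G T = (tri G (ch1 T) + tri G (ch2 T) + tri G (ch3 T) + tri G (ch4 T))%C.
Proof.
  intros HG Hr [Ha [Hb Hc]]. destruct T as [a b c]. simpl in *.
  unfold tri, ch1, ch2, ch3, ch4; simpl.
  assert (Hab := Cmod_mid a b r Ha Hb).
  assert (Hbc := Cmod_mid b c r Hb Hc).
  assert (Hca := Cmod_mid c a r Hc Ha).
  rewrite (seg_split G r a b), (seg_split G r b c), (seg_split G r c a) by auto.
  rewrite (seg_anti G r (mid c a) (mid a b)) by auto.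
  rewrite (seg_anti G r (mid a b) (mid b c)) by auto.
  rewrite (seg_anti G r (mid b c) (mid c a)) by auto.
  ring.
Qed.

Lemma perim_ch (T : tri3) :
  perim (ch1 T) = perim T / 2 /\ perim (ch2 T) = perim T / 2 /\
  perim (ch3 T) = perim T / 2 /\ perim (ch4 T) = perim T / 2.
Proof.
  destruct T as [a b c]. unfold perim, ch1, ch2, ch3, ch4; simpl.
  assert (K : forall u v : C, u = (RtoC (/2) * v)%C -> Cmod u = Cmod v / 2).
  { intros u v ->. rewrite Cmod_mult, Cmod_R, Rabs_pos_eq by lra. field. }
  assert (Hs : forall z : C, Cmod (- z) = Cmod z) by (intros; apply Cmod_opp).
  assert (H2 : RtoC (/2) = (/ RtoC 2)%C) by (apply RtoC_inv; lra).
  assert (H2' : RtoC 2 <> 0%C) by (intro E; apply RtoC_inj in E; lra).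
  assert (F : forall u v : C, u = (RtoC (/2) * v)%C -> Cmod u = Cmod v / 2) by exact K.
  set (m1 := mid a b). set (m2 := mid b c). set (m3 := mid c a).
  assert (E1 : Cmod (m1 - a) = Cmod (b - a) / 2) by (apply F; unfold m1, mid; ring).
  assert (E2 : Cmod (b - m1) = Cmod (b - a) / 2) by (apply F; unfold m1, mid; rewrite H2; field; auto).
  assert (E3 : Cmod (m2 - b) = Cmod (c - b) / 2) by (apply F; unfold m2, mid; ring).
  assert (E4 : Cmod (c - m2) = Cmod (c - b) / 2) by (apply F; unfold m2, mid; rewrite H2; field; auto).
  assert (E5 : Cmod (m3 - c) = Cmod (a - c) / 2) by (apply F; unfold m3, mid; ring).
  assert (E6 : Cmod (a - m3) = Cmod (a - c) / 2) by (apply F; unfold m3, mid; rewrite H2; field; auto).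
  assert (E7 : Cmod (m3 - m1) = Cmod (c - b) / 2) by (apply F; unfold m1, m3, mid; rewrite H2; field; auto).
  assert (E8 : Cmod (m1 - m2) = Cmod (a - c) / 2) by (apply F; unfold m1, m2, mid; rewrite H2; field; auto).
  assert (E9 : Cmod (m2 - m3) = Cmod (b - a) / 2) by (apply F; unfold m2, m3, mid; rewrite H2; field; auto).
  assert (E7' : Cmod (m1 - m3) = Cmod (c - b) / 2) by (rewrite <- E7, <- Hs; f_equal; ring).
  assert (E8' : Cmod (m2 - m1) = Cmod (a - c) / 2) by (rewrite <- E8, <- Hs; f_equal; ring).
  assert (E9' : Cmod (m3 - m2) = Cmod (b - a) / 2) by (rewrite <- E9, <- Hs; f_equal; ring).
  repeat split; simpl.
  - rewrite E1, E7, E6; field.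
  - rewrite E2, E3, E8; field.
  - rewrite E9, E4, E5; field.
  - rewrite E8', E9', E7'; field.
Qed.

Definition Kp (r : R) (k : C) (m : R) (w : C) : Prop := Cmod w <= r /\ m <= Re (w * k).

Lemma Kp_convex r k m x y t : Kp r k m x -> Kp r k m y -> 0 <= t <= 1 -> Kp r k m (x + RtoC t * (y - x))%C.
Proof.
  intros [Hx1 Hx2] [Hy1 Hy2] Ht. split.
  - apply Cmod_convex; auto.
  - assert (E : Re ((x + RtoC t * (y - x)) * k)%C = (1 - t) * Re (x * k) + t * Re (y * k)).
    { destruct x, y, k; simpl; ring. }
    rewrite E. nra.
Qed.

Definition K3 r k m T := Kp r k m (va T) /\ Kp r k m (vb T) /\ Kp r k m (vc T).

Definition step (G : C -> C) (T : tri3) : tri3 :=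
  if Rle_dec (Cmod (tri G T) / 4) (Cmod (tri G (ch1 T))) then ch1 T else
  if Rle_dec (Cmod (tri G T) / 4) (Cmod (tri G (ch2 T))) then ch2 T else
  if Rle_dec (Cmod (tri G T) / 4) (Cmod (tri G (ch3 T))) then ch3 T else ch4 T.

Lemma step_props (G : C -> C) r k m T :
  (forall w, Cmod w < 1 -> ccont G w) -> r < 1 -> K3 r k m T ->
  Cmod (tri G T) / 4 <= Cmod (tri G (step G T)) /\
  perim (step G T) = perim T / 2 /\
  K3 r k m (step G T) /\
  Cmod (va (step G T) - va T) <= perim T.
Proof.
  intros HG Hr HK.
  destruct HK as [Ha [Hb Hc]].
  assert (Hab : Kp r k m (mid (va T) (vb T))) by (apply Kp_convex; auto; lra).
  assert (Hbc : Kp r k m (mid (vb T) (vc T))) by (apply Kp_convex; auto; lra).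
  assert (Hca : Kp r k m (mid (vc T) (va T))) by (apply Kp_convex; auto; lra).
  destruct (perim_ch T) as [P1 [P2 [P3 P4]]].
  assert (Hp1 : 0 <= Cmod (vb T - va T)) by apply Cmod_ge_0.
  assert (Hp2 : 0 <= Cmod (vc T - vb T)) by apply Cmod_ge_0.
  assert (Hp3 : 0 <= Cmod (va T - vc T)) by apply Cmod_ge_0.
  assert (HP : perim T = Cmod (vb T - va T) + Cmod (vc T - vb T) + Cmod (va T - vc T)) by reflexivity.
  assert (Hhalf : forall v : C, Cmod (RtoC (/2) * v)%C = Cmod v / 2).
  { intros v. rewrite Cmod_mult, Cmod_R, Rabs_pos_eq by lra. field. }
  unfold step.
  destruct (Rle_dec _ (Cmod (tri G (ch1 T)))) as [H1|H1].
  { repeat split; auto; simpl; try (destruct Ha; destruct Hab; destruct Hca; auto).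
    replace (va T - va T)%C with (RtoC 0) by ring. rewrite Cmod_0. lra. }
  destruct (Rle_dec _ (Cmod (tri G (ch2 T)))) as [H2|H2].
  { repeat split; auto; simpl; try (destruct Hb; destruct Hab; destruct Hbc; auto).
    unfold mid. replace (va T + RtoC (/ 2) * (vb T - va T) - va T)%C with (RtoC (/2) * (vb T - va T))%C by ring.
    rewrite Hhalf. lra. }
  destruct (Rle_dec _ (Cmod (tri G (ch3 T)))) as [H3|H3].
  { repeat split; auto; simpl; try (destruct Hc; destruct Hbc; destruct Hca; auto).
    unfold mid. replace (vc T + RtoC (/ 2) * (va T - vc T) - va T)%C with (- (RtoC (/2) * (va T - vc T)))%C.
    rewrite Cmod_opp, Hhalf. lra.
    assert (H2' : RtoC (/2) = (/ RtoC 2)%C) by (apply RtoC_inv; lra).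
    rewrite H2'. field. }
  repeat split; auto; simpl; try (destruct Hab; destruct Hbc; destruct Hca; auto).
  - assert (E := tri_decomp G r T HG Hr ltac:(repeat split; [apply Ha|apply Hb|apply Hc])).
    assert (Cmod (tri G T) <= Cmod (tri G (ch1 T)) + Cmod (tri G (ch2 T)) + Cmod (tri G (ch3 T)) + Cmod (tri G (ch4 T))).
    { rewrite E. eapply Rle_trans; [apply Cmod_triangle|].
      apply Rplus_le_compat_r. eapply Rle_trans; [apply Cmod_triangle|].
      apply Rplus_le_compat_r. apply Cmod_triangle. }
    lra.
  - unfold mid. replace (va T + RtoC (/ 2) * (vb T - va T) - va T)%C with (RtoC (/2) * (vb T - va T))%C by ring.
    rewrite Hhalf. lra.
Qed.

Lemma hpow_bounds k : 0 < (/2)^k <= 1.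
Proof. induction k; simpl; lra. Qed.

Lemma hpow_mono n m : (n <= m)%nat -> (/2)^m <= (/2)^n.
Proof.
  intros H. replace m with (n + (m - n))%nat by lia. rewrite pow_add.
  destruct (hpow_bounds n), (hpow_bounds (m - n)). nra.
Qed.

Lemma hpow_small (C0 eps : R) : 0 < eps -> exists N, forall n, (n >= N)%nat -> C0 * (/2)^n < eps.
Proof.
  intros He.
  destruct (pow_lt_1_zero (/2) ltac:(rewrite Rabs_pos_eq; lra) (eps / (Rabs C0 + 1)))
    as [N HN].
  { apply Rdiv_lt_0_compat; [lra|]. generalize (Rabs_pos C0); lra. }
  exists N. intros n Hn. specialize (HN n Hn).
  destruct (hpow_bounds n).
  rewrite Rabs_pos_eq in HN by lra.
  apply Rle_lt_trans with (Rabs C0 * (/2)^n).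
  - apply Rmult_le_compat_r; [lra | apply Rle_abs].
  - assert (0 <= Rabs C0) by apply Rabs_pos.
    apply Rle_lt_trans with ((Rabs C0 + 1) * (/2)^n); [nra|].
    apply Rlt_le_trans with ((Rabs C0 + 1) * (eps / (Rabs C0 + 1))).
    + apply Rmult_lt_compat_l; lra.
    + right; field; lra.
Qed.

Lemma lim_le (x y C0 : R) : (forall n, x <= y + C0 * (/2)^n) -> x <= y.
Proof.
  intros H. destruct (Rle_dec x y) as [|Hn]; [assumption|].
  destruct (hpow_small C0 (x - y)) as [N HN]; [lra|].
  specialize (HN N (le_n _)). specialize (H N). lra.
Qed.

Lemma Un_cv_bound (u : nat -> R) (l c B : R) (n : nat) :
  Un_cv u l -> (forall m, (m >= n)%nat -> Rabs (u m - c) <= B) -> Rabs (l - c) <= B.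
Proof.
  intros Hu Hb. destruct (Rle_dec (Rabs (l - c)) B) as [|Hn]; [assumption|].
  destruct (Hu (Rabs (l - c) - B)) as [N HN]; [lra|].
  specialize (HN (Nat.max N n) (Nat.le_max_l _ _)).
  specialize (Hb (Nat.max N n) (Nat.le_max_r _ _)).
  unfold Rdist in HN.
  assert (Rabs (l - c) <= Rabs (u (Nat.max N n) - l) + Rabs (u (Nat.max N n) - c)).
  { replace (l - c) with (-(u (Nat.max N n) - l) + (u (Nat.max N n) - c)) by ring.
    eapply Rle_trans; [apply Rabs_triang|]. rewrite Rabs_Ropp. lra. }
  lra.
Qed.

Lemma Cmod_le_sum (z : C) : Cmod z <= Rabs (Re z) + Rabs (Im z).
Proof.
  destruct z as [x y]. unfold Cmod; simpl.
  rewrite <- (sqrt_Rsqr (Rabs x + Rabs y)) by (generalize (Rabs_pos x) (Rabs_pos y); lra).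
  apply sqrt_le_1_alt. unfold Rsqr.
  generalize (Rabs_pos x) (Rabs_pos y). intros.
  replace (x * (x * 1) + y * (y * 1)) with (Rabs x * Rabs x + Rabs y * Rabs y).
  - nra.
  - rewrite <- !Rabs_mult, !Rabs_pos_eq by nra. ring.
Qed.

Lemma im_le_Cmod' (z : C) : Rabs (Im z) <= Cmod z.
Proof.
  destruct z as [x y]. unfold Cmod; simpl.
  rewrite <- sqrt_Rsqr_abs. apply sqrt_le_1_alt. unfold Rsqr. nra.
Qed.

Lemma cauchy_limit (a : nat -> C) (B : R) :
  0 <= B -> (forall n k, Cmod (a (n + k)%nat - a n)%C <= B * (/2)^n) ->
  exists q, forall n, Cmod (q - a n)%C <= 2 * B * (/2)^n.
Proof.
  intros HB Ha.
  assert (Hd : forall (f : C -> R), (forall z, Rabs (f z) <= Cmod z) -> (forall z w, f (z - w)%C = f z - f w) ->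
     forall n m, (m >= n)%nat -> Rabs (f (a m) - f (a n)) <= B * (/2)^n).
  { intros f Hf Hl n m Hm. replace m with (n + (m - n))%nat by lia.
    rewrite <- Hl. eapply Rle_trans; [apply Hf| apply Ha]. }
  assert (Hc : forall (f : C -> R), (forall z, Rabs (f z) <= Cmod z) -> (forall z w, f (z - w)%C = f z - f w) ->
     Cauchy_crit (fun n => f (a n))).
  { intros f Hf Hl eps He. destruct (hpow_small B eps He) as [N HN].
    exists N. intros n m Hn Hm. unfold Rdist.
    destruct (Nat.le_ge_cases n m) as [Hnm|Hnm].
    - rewrite Rabs_minus_sym. eapply Rle_lt_trans; [apply (Hd f Hf Hl n m); lia|]. apply HN; lia.
    - eapply Rle_lt_trans; [apply (Hd f Hf Hl m n); lia|]. apply HN; lia. }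
  assert (Hre : forall z w, Re (z - w)%C = Re z - Re w) by (intros [] []; simpl; ring).
  assert (Him : forall z w, Im (z - w)%C = Im z - Im w) by (intros [] []; simpl; ring).
  destruct (Rcomplete.R_complete _ (Hc Re re_le_Cmod Hre)) as [lx Hlx].
  destruct (Rcomplete.R_complete _ (Hc Im im_le_Cmod' Him)) as [ly Hly].
  exists (lx, ly). intros n.
  eapply Rle_trans; [apply Cmod_le_sum|].
  assert (Rabs (Re ((lx, ly) - a n)%C) <= B * (/2)^n).
  { rewrite Hre. simpl. apply (Un_cv_bound _ _ _ _ n Hlx). intros m Hm. apply (Hd Re re_le_Cmod Hre); auto. }
  assert (Rabs (Im ((lx, ly) - a n)%C) <= B * (/2)^n).
  { rewrite Him. simpl. apply (Un_cv_bound _ _ _ _ n Hly). intros m Hm. apply (Hd Im im_le_Cmod' Him); auto. }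
  lra.
Qed.

Lemma ccont_affine (c l q w : C) : ccont (fun v => c + l * (v - q))%C w.
Proof.
  intros eps He. exists (eps / (Cmod l + 1)).
  assert (0 <= Cmod l) by apply Cmod_ge_0.
  split; [apply Rdiv_lt_0_compat; lra|].
  intros v Hv.
  replace (c + l * (v - q) - (c + l * (w - q)))%C with (l * (v - w))%C by ring.
  rewrite Cmod_mult.
  assert (0 <= Cmod (v - w)) by apply Cmod_ge_0.
  apply Rle_lt_trans with ((Cmod l + 1) * Cmod (v - w)); [nra|].
  apply Rlt_le_trans with ((Cmod l + 1) * (eps / (Cmod l + 1))).
  - apply Rmult_lt_compat_l; lra.
  - right; field; lra.
Qed.

Lemma ccont_sub (G H : C -> C) (w : C) : ccont G w -> ccont H w -> ccont (fun v => G v - H v)%C w.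
Proof.
  intros HG HH eps He.
  destruct (HG (eps/2)) as [d1 [Hd1 H1]]; [lra|].
  destruct (HH (eps/2)) as [d2 [Hd2 H2]]; [lra|].
  exists (Rmin d1 d2). split; [apply Rmin_pos; auto|].
  intros v Hv. specialize (H1 v ltac:(eapply Rlt_le_trans; [exact Hv| apply Rmin_l])).
  specialize (H2 v ltac:(eapply Rlt_le_trans; [exact Hv| apply Rmin_r])).
  replace (G v - H v - (G w - H w))%C with ((G v - G w) - (H v - H w))%C by ring.
  eapply Rle_lt_trans; [apply Cmod_triangle|]. rewrite Cmod_opp. lra.
Qed.

Lemma tri_affine (c l q : C) (T : tri3) : tri (fun w => c + l * (w - q))%C T = 0%C.
Proof.
  unfold tri. rewrite !seg_affine. ring.
Qed.

Fixpoint Tn (G : C -> C) (T : tri3) (n : nat) : tri3 :=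
  match n with O => T | S n => step G (Tn G T n) end.

Lemma quarter n : (/4)^n = (/2)^n * (/2)^n.
Proof. rewrite <- Rpow_mult_distr. f_equal. field. Qed.

Lemma seg_pt_near (T : tri3) (x y : C) (t : R) :
  (x = va T \/ x = vb T \/ x = vc T) -> (y = va T \/ y = vb T \/ y = vc T) -> 0 <= t <= 1 ->
  Cmod (x + RtoC t * (y - x) - va T)%C <= perim T.
Proof.
  intros Hx Hy Ht.
  assert (Hv : forall z, (z = va T \/ z = vb T \/ z = vc T) -> Cmod (z - va T)%C <= perim T).
  { intros z Hz. unfold perim.
    generalize (Cmod_ge_0 (vb T - va T)) (Cmod_ge_0 (vc T - vb T)) (Cmod_ge_0 (va T - vc T)).
    destruct Hz as [ -> | [ -> | -> ] ].
    - replace (va T - va T)%C with (RtoC 0) by ring. rewrite Cmod_0. lra.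
    - lra.
    - replace (vc T - va T)%C with (- (va T - vc T))%C by ring. rewrite Cmod_opp. lra. }
  replace (x + RtoC t * (y - x) - va T)%C with ((x - va T) + RtoC t * ((y - va T) - (x - va T)))%C by ring.
  apply Cmod_convex; auto.
Qed.

Lemma goursat (G : C -> C) (r : R) (k : C) (m : R) (T : tri3) :
  (forall w, Cmod w < 1 -> ccont G w) ->
  (forall w, Cmod w < 1 -> w <> 0%C -> exists l, cdiff G w l) ->
  r < 1 -> 0 < m -> K3 r k m T -> tri G T = 0%C.
Proof.
  intros HGc HGd Hr Hm HT.
  set (P0 := perim T). set (I0 := Cmod (tri G T)).
  assert (HP0 : 0 <= P0).
  { unfold P0, perim. generalize (Cmod_ge_0 (vb T - va T)) (Cmod_ge_0 (vc T - vb T)) (Cmod_ge_0 (va T - vc T)). lra. }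
  assert (HS : forall n, K3 r k m (Tn G T n) /\ perim (Tn G T n) = P0 * (/2)^n /\
                         I0 * (/4)^n <= Cmod (tri G (Tn G T n))).
  { induction n as [|n [IH1 [IH2 IH3]]].
    - simpl. repeat split; try apply HT; [unfold P0; ring | unfold I0; lra].
    - destruct (step_props G r k m (Tn G T n) HGc Hr IH1) as [A [B [C D]]].
      simpl. repeat split; try apply C.
      + rewrite B, IH2. field.
      + replace (I0 * (/ 4 * (/ 4) ^ n)) with ((I0 * (/ 4) ^ n) / 4) by field. lra. }
  assert (Hst : forall n, Cmod (va (Tn G T (S n)) - va (Tn G T n)) <= P0 * (/2)^n).
  { intros n. destruct (HS n) as [H1 [H2 H3]].
    destruct (step_props G r k m (Tn G T n) HGc Hr H1) as [A [B [C D]]].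
    simpl. rewrite <- H2. exact D. }
  set (a := fun n => va (Tn G T n)).
  assert (Hc : forall n j, Cmod (a (n + j)%nat - a n) <= 2 * P0 * ((/2)^n - (/2)^(n + j))).
  { intros n j. induction j as [|j IHj].
    - rewrite Nat.add_0_r. replace (a n - a n)%C with (RtoC 0) by ring. rewrite Cmod_0. lra.
    - rewrite Nat.add_succ_r.
      replace (a (S (n + j)) - a n)%C with ((a (S (n + j)) - a (n + j)%nat) + (a (n + j)%nat - a n))%C by ring.
      eapply Rle_trans; [apply Cmod_triangle|].
      assert (Hx := Hst (n + j)%nat). unfold a. fold a.
      simpl pow. unfold a in IHj |- *. lra. }
  destruct (cauchy_limit a (2 * P0)) as [q Hq]; [lra| |].
  { intros n j. eapply Rle_trans; [apply Hc|]. destruct (hpow_bounds (n + j)). nra. }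
  assert (Hq' : forall n, Cmod (q - a n) <= 4 * P0 * (/2)^n) by (intros n; specialize (Hq n); lra).
  assert (Hqr : Cmod q <= r).
  { apply (lim_le _ _ (4 * P0)). intros n.
    destruct (HS n) as [[[Ha _] _] _].
    replace q with (a n + (q - a n))%C by ring.
    eapply Rle_trans; [apply Cmod_triangle|]. specialize (Hq' n). unfold a in *. lra. }
  assert (Hqm : m <= Re (q * k)).
  { apply (lim_le _ _ (4 * P0 * Cmod k)). intros n.
    destruct (HS n) as [[[_ Ha] _] _].
    assert (E : Re (a n * k)%C = Re (q * k)%C - Re ((q - a n) * k)%C) by (destruct (a n), q, k; simpl; ring).
    assert (E2 := re_le_Cmod ((q - a n) * k)%C). rewrite Cmod_mult in E2.
    specialize (Hq' n). assert (0 <= Cmod k) by apply Cmod_ge_0.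
    unfold a in *. rewrite E in Ha.
    assert (Cmod (q - va (Tn G T n)) * Cmod k <= 4 * P0 * (/ 2) ^ n * Cmod k) by nra.
    apply Rabs_le_between in E2 ||
      (generalize (Rle_abs (- Re ((q - va (Tn G T n)) * k)%C)); rewrite Rabs_Ropp; intro).
    all: nra. }
  assert (Hq0 : q <> 0%C).
  { intro E. rewrite E in Hqm. simpl in Hqm. lra. }
  destruct (HGd q ltac:(lra) Hq0) as [l Hl].
  assert (Hmain : forall eps, 0 < eps -> I0 <= 5 * eps * P0 * P0).
  { intros eps He.
    destruct (Hl eps He) as [del [Hdel Hd]].
    destruct (hpow_small (5 * P0) del Hdel) as [N HN].
    specialize (HN N (le_n _)).
    destruct (HS N) as [[Kva [Kvb Kvc]] [HperN HIN]].
    set (U := Tn G T N) in *.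
    set (A := fun w => (G q + l * (w - q))%C).
    assert (Hra : Cmod (va U) <= r) by apply Kva.
    assert (Hrb : Cmod (vb U) <= r) by apply Kvb.
    assert (Hrc : Cmod (vc U) <= r) by apply Kvc.
    assert (Hside : forall x y, (x = va U \/ x = vb U \/ x = vc U) -> (y = va U \/ y = vb U \/ y = vc U) ->
       Cmod x <= r -> Cmod y <= r ->
       seg (fun w => G w - A w)%C x y = (seg G x y - seg A x y)%C /\
       Cmod (seg (fun w => G w - A w)%C x y) <= Cmod (y - x) * (eps * (5 * P0 * (/2)^N))).
    { intros x y Hx Hy Hxr Hyr. split.
      - apply seg_minus; [apply (segc G r); auto | intros; apply ccont_affine].
      - apply seg_bound.
        + intros t Ht. apply ccont_sub; [apply (segc G r); auto | apply ccont_affine].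
        + intros t Ht.
          assert (Hw : Cmod (x + RtoC t * (y - x) - q)%C <= 5 * P0 * (/2)^N).
          { replace (x + RtoC t * (y - x) - q)%C with ((x + RtoC t * (y - x) - va U) + (va U - q))%C by ring.
            eapply Rle_trans; [apply Cmod_triangle|].
            assert (H1 := seg_pt_near U x y t Hx Hy Ht).
            assert (H2 := Hq' N). unfold a in H2. fold U in H2.
            replace (va U - q)%C with (- (q - va U))%C by ring. rewrite Cmod_opp. lra. }
          specialize (Hd (x + RtoC t * (y - x))%C ltac:(lra)).
          unfold A. replace (G (x + RtoC t * (y - x)) - (G q + l * (x + RtoC t * (y - x) - q)))%C
            with (G (x + RtoC t * (y - x)) - G q - l * (x + RtoC t * (y - x) - q))%C by ring.
          eapply Rle_trans; [exact Hd|]. apply Rmult_le_compat_l; lra. }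
    destruct (Hside (va U) (vb U)) as [E1 B1]; auto.
    destruct (Hside (vb U) (vc U)) as [E2 B2]; auto.
    destruct (Hside (vc U) (va U)) as [E3 B3]; auto.
    assert (Etri : tri G U = tri (fun w => G w - A w)%C U).
    { assert (Z := tri_affine (G q) l q U). fold A in Z.
      unfold tri in *. rewrite E1, E2, E3.
      transitivity ((seg G (va U) (vb U) + seg G (vb U) (vc U) + seg G (vc U) (va U))
         - (seg A (va U) (vb U) + seg A (vb U) (vc U) + seg A (vc U) (va U)))%C.
      - rewrite Z. ring.
      - ring. }
    assert (Hb : Cmod (tri G U) <= perim U * (eps * (5 * P0 * (/2)^N))).
    { rewrite Etri. unfold tri, perim.
      eapply Rle_trans; [apply Cmod_triangle|].
      eapply Rle_trans; [apply Rplus_le_compat; [apply Cmod_triangle | apply Rle_refl]|].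
      lra. }
    rewrite HperN, quarter in *.
    destruct (hpow_bounds N).
    assert (Hh : 0 < (/2)^N * (/2)^N) by nra.
    apply (Rmult_le_reg_r ((/2)^N * (/2)^N)); [exact Hh|].
    eapply Rle_trans; [exact HIN|]. eapply Rle_trans; [exact Hb|]. right; ring. }
  apply Cmod_eq_0. fold I0.
  assert (0 <= I0) by apply Cmod_ge_0.
  destruct (Rle_dec I0 0) as [|Hn]; [lra|].
  specialize (Hmain (I0 / (10 * P0 * P0 + 1))).
  assert (0 <= P0 * P0) by nra.
  assert (Hp : 0 < I0 / (10 * P0 * P0 + 1)) by (apply Rdiv_lt_0_compat; lra).
  specialize (Hmain Hp).
  assert (I0 * (10 * P0 * P0 + 1) <= 5 * I0 * P0 * P0).
  { replace (5 * I0 * P0 * P0) with (5 * (I0 / (10 * P0 * P0 + 1)) * P0 * P0 * (10 * P0 * P0 + 1)) by (field; lra).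
    apply Rmult_le_compat_r; lra. }
  nra.
Qed.

Lemma ccont_const (c w : C) : ccont (fun _ => c) w.
Proof.
  intros eps He. exists 1. split; [lra|]. intros v _.
  replace (c - c)%C with (RtoC 0) by ring. rewrite Cmod_0. lra.
Qed.

Lemma tri0 (G : C -> C) (r : R) (a b : C) :
  (forall w, Cmod w < 1 -> ccont G w) ->
  (forall w, Cmod w < 1 -> w <> 0%C -> exists l, cdiff G w l) ->
  r < 1 -> Cmod a <= r -> Cmod b <= r -> a <> 0%C -> 0 < Re (b * Cconj a) ->
  tri G (mk3 0 a b) = 0%C.
Proof.
  intros HGc HGd Hr Ha Hb Ha0 Hba.
  assert (Haa : 0 < Re (a * Cconj a)).
  { destruct a as [a1 a2]. simpl.
    assert (a1 <> 0 \/ a2 <> 0).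
    { destruct (Req_dec a1 0), (Req_dec a2 0); auto. subst. exfalso; apply Ha0; reflexivity. }
    destruct H; nra. }
  set (mu := Rmin (Re (a * Cconj a)) (Re (b * Cconj a))).
  assert (Hmu : 0 < mu) by (apply Rmin_pos; auto).
  assert (Hr0 : 0 <= r) by (generalize (Cmod_ge_0 a); lra).
  assert (Hcol : forall d : C, Cmod d <= r -> forall s, 0 <= s <= 1 -> ccont G (0 + RtoC s * d)%C).
  { intros d Hd s Hs. apply HGc. replace (0 + RtoC s * d)%C with (RtoC s * d)%C by ring.
    rewrite Cmod_mult, Cmod_R, Rabs_pos_eq by lra. nra. }
  assert (Hsc : forall e (d : C), 0 <= e <= 1 -> Cmod d <= r -> Cmod (RtoC e * d)%C <= r).
  { intros e d He Hd. rewrite Cmod_mult, Cmod_R, Rabs_pos_eq by lra. nra. }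
  assert (HE : forall e, 0 < e <= 1 -> tri G (mk3 0 a b) = tri G (mk3 0 (RtoC e * a) (RtoC e * b))%C).
  { intros e He.
    assert (Hre : forall (x : C) (e' : R), Re ((RtoC e' * x) * Cconj a)%C = e' * Re (x * Cconj a)).
    { intros [] e'; destruct a; simpl; ring. }
    assert (K1 : Kp r (Cconj a) (e * mu) (RtoC e * a)%C).
    { split; [apply Hsc; auto; lra|]. rewrite Hre. unfold mu.
      apply Rmult_le_compat_l; [lra | apply Rmin_l]. }
    assert (K2 : Kp r (Cconj a) (e * mu) a).
    { split; auto. unfold mu. generalize (Rmin_l (Re (a * Cconj a)) (Re (b * Cconj a))). nra. }
    assert (K3' : Kp r (Cconj a) (e * mu) b).
    { split; auto. unfold mu. generalize (Rmin_r (Re (a * Cconj a)) (Re (b * Cconj a))). nra. }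
    assert (K4 : Kp r (Cconj a) (e * mu) (RtoC e * b)%C).
    { split; [apply Hsc; auto; lra|]. rewrite Hre. unfold mu.
      apply Rmult_le_compat_l; [lra | apply Rmin_r]. }
    assert (Z1 : tri G (mk3 (RtoC e * a) a b) = 0%C).
    { apply (goursat G r (Cconj a) (e * mu)); auto. nra. repeat split; simpl; apply K1 || apply K2 || apply K3'. }
    assert (Z2 : tri G (mk3 (RtoC e * a) b (RtoC e * b)) = 0%C).
    { apply (goursat G r (Cconj a) (e * mu)); auto. nra. repeat split; simpl; apply K1 || apply K3' || apply K4. }
    unfold tri in *; simpl in *.
    assert (C1 := seg_chasles G 0 a 0 e 1 ltac:(lra) ltac:(lra) ltac:(lra) (Hcol a Ha)).
    assert (C2 := seg_chasles G 0 b 1 e 0 ltac:(lra) ltac:(lra) ltac:(lra) (Hcol b Hb)).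
    replace (0 + RtoC 0 * a)%C with (RtoC 0) in C1 by ring.
    replace (0 + RtoC 1 * a)%C with a in C1 by ring.
    replace (0 + RtoC e * a)%C with (RtoC e * a)%C in C1 by ring.
    replace (0 + RtoC 0 * b)%C with (RtoC 0) in C2 by ring.
    replace (0 + RtoC 1 * b)%C with b in C2 by ring.
    replace (0 + RtoC e * b)%C with (RtoC e * b)%C in C2 by ring.
    rewrite <- C1, <- C2.
    transitivity ((seg G (RtoC 0) (RtoC e * a) + seg G (RtoC e * a) (RtoC e * b) + seg G (RtoC e * b) (RtoC 0))
      + (seg G (RtoC e * a) a + seg G a b + seg G b (RtoC e * a))
      + (seg G (RtoC e * a) b + seg G b (RtoC e * b) + seg G (RtoC e * b) (RtoC e * a)))%C.
    - rewrite (seg_anti G r (RtoC e * a) b) by (first [assumption | lra | apply Hsc; auto; lra]).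
      rewrite (seg_anti G r (RtoC e * a) (RtoC e * b)) by (first [assumption | lra | apply Hsc; auto; lra]). ring.
    - rewrite Z1, Z2. ring. }
  destruct (HGc 0%C ltac:(rewrite Cmod_0; lra) 1 ltac:(lra)) as [d0 [Hd0 Hc0]].
  set (M := Cmod (G 0%C) + 1).
  set (L := Cmod a + Cmod (b - a) + Cmod b).
  assert (HL : 0 <= L) by (unfold L; generalize (Cmod_ge_0 a) (Cmod_ge_0 (b - a)) (Cmod_ge_0 b); lra).
  assert (Hsmall : forall e, 0 < e <= 1 -> e < d0 -> Cmod (tri G (mk3 0 a b)) <= e * (L * M)).
  { intros e He Hed. rewrite (HE e He). unfold tri; simpl.
    assert (Hpt : forall x y, Cmod x <= e * r -> Cmod y <= e * r -> forall t, 0 <= t <= 1 ->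
       Cmod (x + RtoC t * (y - x))%C < 1 /\ Cmod (G (x + RtoC t * (y - x))%C) <= M).
    { intros x y Hx Hy t Ht. assert (Hw := Cmod_convex x y (e * r) t Hx Hy Ht).
      split; [nra|].
      assert (Hw' : Cmod (x + RtoC t * (y - x) - 0)%C < d0).
      { replace (x + RtoC t * (y - x) - 0)%C with (x + RtoC t * (y - x))%C by ring. nra. }
      specialize (Hc0 _ Hw').
      replace (G (x + RtoC t * (y - x))%C) with ((G (x + RtoC t * (y - x))%C - G 0%C) + G 0%C)%C by ring.
      eapply Rle_trans; [apply Cmod_triangle|]. unfold M; lra. }
    assert (Hb' : forall x y, Cmod x <= e * r -> Cmod y <= e * r -> Cmod (seg G x y) <= Cmod (y - x) * M).
    { intros x y Hx Hy. apply seg_bound.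
      - intros t Ht. apply HGc. apply (Hpt x y Hx Hy t Ht).
      - intros t Ht. apply (Hpt x y Hx Hy t Ht). }
    assert (H0 : Cmod (RtoC 0) <= e * r) by (rewrite Cmod_0; nra).
    assert (Hea : Cmod (RtoC e * a)%C <= e * r) by (rewrite Cmod_mult, Cmod_R, Rabs_pos_eq by lra; nra).
    assert (Heb : Cmod (RtoC e * b)%C <= e * r) by (rewrite Cmod_mult, Cmod_R, Rabs_pos_eq by lra; nra).
    assert (B1 := Hb' _ _ H0 Hea). assert (B2 := Hb' _ _ Hea Heb). assert (B3 := Hb' _ _ Heb H0).
    replace (RtoC e * a - RtoC 0)%C with (RtoC e * a)%C in B1 by ring.
    replace (RtoC e * b - RtoC e * a)%C with (RtoC e * (b - a))%C in B2 by ring.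
    replace (RtoC 0 - RtoC e * b)%C with (- (RtoC e * b))%C in B3 by ring.
    rewrite Cmod_opp in B3. rewrite !Cmod_mult, Cmod_R, Rabs_pos_eq in B1, B2, B3 by lra.
    eapply Rle_trans; [apply Cmod_triangle|].
    eapply Rle_trans; [apply Rplus_le_compat; [apply Cmod_triangle | apply Rle_refl]|].
    unfold L. lra. }
  apply Cmod_eq_0.
  assert (0 <= Cmod (tri G (mk3 0 a b))) by apply Cmod_ge_0.
  destruct (Rle_dec (Cmod (tri G (mk3 0 a b))) 0) as [|Hn]; [lra|].
  assert (HM : 0 < M) by (unfold M; generalize (Cmod_ge_0 (G 0%C)); lra).
  set (X := Cmod (tri G (mk3 0 a b))) in *.
  set (e := Rmin (Rmin 1 (d0 / 2)) (X / (2 * (L * M) + 1))).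
  assert (He0 : 0 < e).
  { unfold e. apply Rmin_pos; [apply Rmin_pos; lra|]. apply Rdiv_lt_0_compat; nra. }
  assert (He1 : e <= 1) by (unfold e; eapply Rle_trans; [apply Rmin_l| apply Rmin_l]).
  assert (He2 : e < d0) by (unfold e; eapply Rle_lt_trans; [apply Rmin_l| eapply Rle_lt_trans; [apply Rmin_r| lra]]).
  assert (He3 : e <= X / (2 * (L * M) + 1)) by (unfold e; apply Rmin_r).
  specialize (Hsmall e (conj He0 He1) He2).
  assert (0 <= L * M) by nra.
  assert (e * (2 * (L * M) + 1) <= X).
  { apply (Rmult_le_compat_r (2 * (L * M) + 1)) in He3; [|lra].
    replace (X / (2 * (L * M) + 1) * (2 * (L * M) + 1)) with X in He3 by (field; lra). exact He3. }
  nra.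
Qed.

Lemma seg_00 (G : C -> C) : (forall w, Cmod w < 1 -> ccont G w) -> seg G 0%C 0%C = 0%C.
Proof.
  intros HG.
  assert (E := seg_anti G 0 0%C 0%C HG ltac:(lra) ltac:(rewrite Cmod_0; lra) ltac:(rewrite Cmod_0; lra)).
  revert E. generalize (seg G 0%C 0%C). intros [x y] E. simpl in E. injection E. intros.
  apply injective_projections; simpl; lra.
Qed.

Lemma prim_deriv (G : C -> C) (z0 : C) :
  (forall w, Cmod w < 1 -> ccont G w) ->
  (forall w, Cmod w < 1 -> w <> 0%C -> exists l, cdiff G w l) ->
  Cmod z0 < 1 -> cdiff (fun z => seg G 0%C z) z0 (G z0).
Proof.
  intros HGc HGd Hz0.
  set (r := (1 + Cmod z0) / 2).
  assert (Hr : r < 1) by (unfold r; lra).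
  assert (Hz0r : Cmod z0 <= r) by (unfold r; lra).
  assert (Hnear : exists d2, 0 < d2 /\ forall w, Cmod (w - z0) < d2 ->
            Cmod w <= r /\ tri G (mk3 0 z0 w) = 0%C).
  { destruct (Ceq_dec z0 0%C) as [E|Hne].
    - subst z0. exists ((1 - 0) / 2). split; [lra|]. intros w Hw.
      replace (w - 0)%C with w in Hw by ring.
      assert (Hwr : Cmod w <= r) by (unfold r; rewrite Cmod_0; lra).
      assert (H0r : Cmod 0%C <= r) by (unfold r; rewrite Cmod_0; lra).
      split; auto. unfold tri; simpl.
      rewrite seg_00 by auto. rewrite (seg_anti G r 0%C w) by auto.
      ring.
    - assert (Hp : 0 < Cmod z0) by (apply Cmod_gt_0; auto).
      exists (Rmin ((1 - Cmod z0) / 2) (Cmod z0)). split; [apply Rmin_pos; lra|].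
      intros w Hw.
      assert (Hw1 : Cmod (w - z0) < (1 - Cmod z0) / 2) by (eapply Rlt_le_trans; [exact Hw | apply Rmin_l]).
      assert (Hw2 : Cmod (w - z0) < Cmod z0) by (eapply Rlt_le_trans; [exact Hw | apply Rmin_r]).
      assert (Hwr : Cmod w <= r).
      { replace w with (z0 + (w - z0))%C by ring. eapply Rle_trans; [apply Cmod_triangle|]. unfold r. lra. }
      split; auto.
      apply (tri0 G r); auto.
      assert (E : Re (w * Cconj z0)%C = Cmod z0 ^ 2 + Re ((w - z0) * Cconj z0)%C).
      { rewrite Cmod2_alt. destruct w, z0; simpl; ring. }
      rewrite E.
      assert (E2 := re_le_Cmod ((w - z0) * Cconj z0)%C). rewrite Cmod_mult, Cmod_conj in E2.
      assert (Cmod (w - z0) * Cmod z0 < Cmod z0 * Cmod z0) by (apply Rmult_lt_compat_r; auto).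
      generalize (Rle_abs (- Re ((w - z0) * Cconj z0)%C)). rewrite Rabs_Ropp. intros. nra. }
  destruct Hnear as [d2 [Hd2 Hnear]].
  intros eps He.
  destruct (HGc z0 Hz0 eps He) as [d1 [Hd1 Hc1]].
  exists (Rmin d1 d2). split; [apply Rmin_pos; auto|].
  intros w Hw.
  assert (Hw1 : Cmod (w - z0) < d1) by (eapply Rlt_le_trans; [exact Hw | apply Rmin_l]).
  assert (Hw2 : Cmod (w - z0) < d2) by (eapply Rlt_le_trans; [exact Hw | apply Rmin_r]).
  destruct (Hnear w Hw2) as [Hwr Ht].
  unfold tri in Ht; simpl in Ht.
  rewrite (seg_anti G r 0%C w) in Ht by (auto; rewrite Cmod_0; unfold r; generalize (Cmod_ge_0 z0); lra).
  assert (E : (seg G 0%C w - seg G 0%C z0 - G z0 * (w - z0))%C = seg (fun v => G v - G z0)%C z0 w).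
  { rewrite seg_minus.
    - rewrite seg_const.
      transitivity (seg G z0 w - G z0 * (w - z0) - (seg G 0%C z0 + seg G z0 w + - seg G 0%C w))%C.
      + ceq. ring.
      + rewrite Ht. ceq. ring.
    - apply (segc G r); auto.
    - intros; apply ccont_const. }
  rewrite E.
  eapply Rle_trans; [apply (seg_bound _ _ _ eps)|].
  - intros t Ht'. apply ccont_sub; [apply (segc G r); auto | apply ccont_const].
  - intros t Ht'. apply Rlt_le. apply Hc1.
    replace (z0 + RtoC t * (w - z0) - z0)%C with (RtoC t * (w - z0))%C by ring.
    rewrite Cmod_mult, Cmod_R, Rabs_pos_eq by lra.
    generalize (Cmod_ge_0 (w - z0)). nra.
  - rewrite Rmult_comm. lra.
Qed.

Lemma cdiff_unique (f : C -> C) (z l1 l2 : C) : cdiff f z l1 -> cdiff f z l2 -> l1 = l2.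
Proof.
  intros H1 H2.
  assert (Hb : forall eps, 0 < eps -> Cmod (l1 - l2) <= 2 * eps).
  { intros eps He.
    destruct (H1 eps He) as [d1 [Hd1 B1]]. destruct (H2 eps He) as [d2 [Hd2 B2]].
    set (h := Rmin d1 d2 / 2).
    assert (Hh : 0 < h) by (unfold h; apply Rdiv_lt_0_compat; [apply Rmin_pos|]; lra).
    assert (Hh1 : h < d1) by (unfold h; generalize (Rmin_l d1 d2); lra).
    assert (Hh2 : h < d2) by (unfold h; generalize (Rmin_r d1 d2); lra).
    set (w := (z + RtoC h)%C).
    assert (Ew : Cmod (w - z) = h) by (unfold w; replace (z + RtoC h - z)%C with (RtoC h) by ring;
                                      rewrite Cmod_R, Rabs_pos_eq; lra).
    specialize (B1 w ltac:(lra)). specialize (B2 w ltac:(lra)). rewrite Ew in B1, B2.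
    assert (E : ((l1 - l2) * (w - z))%C = ((f w - f z - l2 * (w - z)) - (f w - f z - l1 * (w - z)))%C) by ring.
    assert (Cmod ((l1 - l2) * (w - z))%C <= 2 * eps * h).
    { rewrite E. eapply Rle_trans; [apply Cmod_triangle|]. rewrite Cmod_opp. lra. }
    rewrite Cmod_mult, Ew in H.
    apply (Rmult_le_reg_r h); auto. }
  apply Ceq_minus. apply Cmod_eq_0.
  assert (0 <= Cmod (l1 - l2)) by apply Cmod_ge_0.
  destruct (Rle_dec (Cmod (l1 - l2)) 0); [lra|].
  specialize (Hb (Cmod (l1 - l2) / 4) ltac:(lra)). lra.
Qed.

Lemma cdiff_ccont (f : C -> C) (z l : C) : cdiff f z l -> ccont f z.
Proof.
  intros H eps He.
  destruct (H 1 ltac:(lra)) as [d [Hd B]].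
  exists (Rmin d (eps / (Cmod l + 2))).
  assert (0 <= Cmod l) by apply Cmod_ge_0.
  split; [apply Rmin_pos; [lra| apply Rdiv_lt_0_compat; lra]|].
  intros w Hw.
  assert (Hw1 : Cmod (w - z) < d) by (eapply Rlt_le_trans; [exact Hw|apply Rmin_l]).
  assert (Hw2 : Cmod (w - z) < eps / (Cmod l + 2)) by (eapply Rlt_le_trans; [exact Hw|apply Rmin_r]).
  specialize (B w Hw1).
  replace (f w - f z)%C with ((f w - f z - l * (w - z)) + l * (w - z))%C by ring.
  eapply Rle_lt_trans; [apply Cmod_triangle|]. rewrite Cmod_mult.
  assert (0 <= Cmod (w - z)) by apply Cmod_ge_0.
  apply Rle_lt_trans with ((Cmod l + 2) * Cmod (w - z)); [nra|].
  apply Rlt_le_trans with ((Cmod l + 2) * (eps / (Cmod l + 2))); [apply Rmult_lt_compat_l; lra|].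
  right; field; lra.
Qed.

Lemma cdiff_inv (w : C) : w <> 0%C -> cdiff (fun v => / v)%C w (- (/ w * / w))%C.
Proof.
  intros Hw eps He.
  assert (Hp : 0 < Cmod w) by (apply Cmod_gt_0; auto).
  exists (Rmin (Cmod w / 2) (eps * (Cmod w * Cmod w * Cmod w) / 2)).
  split; [apply Rmin_pos; [lra|]; apply Rdiv_lt_0_compat; [|lra]; apply Rmult_lt_0_compat; [lra|];
          apply Rmult_lt_0_compat; [|lra]; apply Rmult_lt_0_compat; lra|].
  intros v Hv.
  assert (Hv1 : Cmod (v - w) < Cmod w / 2) by (eapply Rlt_le_trans; [exact Hv|apply Rmin_l]).
  assert (Hv2 : Cmod (v - w) < eps * (Cmod w * Cmod w * Cmod w) / 2) by (eapply Rlt_le_trans; [exact Hv|apply Rmin_r]).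
  assert (Hvw : Cmod w / 2 <= Cmod v).
  { assert (Cmod w <= Cmod v + Cmod (v - w)).
    { replace w with (v - (v - w))%C at 1 by ring. eapply Rle_trans; [apply Cmod_triangle|].
      rewrite Cmod_opp. lra. }
    lra. }
  assert (Hv0 : v <> 0%C) by (apply Cmod_gt_0; lra).
  replace (/ v - / w - - (/ w * / w) * (v - w))%C with ((v - w) * (v - w) / (v * w * w))%C
    by (field; auto).
  rewrite Cmod_div by (apply Cmod_gt_0; rewrite !Cmod_mult; repeat apply Rmult_lt_0_compat; lra).
  rewrite !Cmod_mult.
  assert (0 <= Cmod (v - w)) by apply Cmod_ge_0.
  assert (Hden : 0 < Cmod v * Cmod w * Cmod w) by (repeat apply Rmult_lt_0_compat; lra).
  apply (Rmult_le_reg_r (Cmod v * Cmod w * Cmod w)); auto.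
  unfold Rdiv. rewrite Rmult_assoc, Rinv_l by lra. rewrite Rmult_1_r.
  assert (Cmod (v - w) <= eps * (Cmod v * Cmod w * Cmod w)).
  { apply Rle_trans with (eps * (Cmod w * Cmod w * Cmod w) / 2); [lra|].
    assert (Cmod w * Cmod w * Cmod w / 2 <= Cmod v * Cmod w * Cmod w).
    { assert (0 < Cmod w * Cmod w) by nra. nra. }
    nra. }
  nra.
Qed.

Lemma cdiff_mult (f g : C -> C) (w a b : C) :
  cdiff f w a -> cdiff g w b -> cdiff (fun v => f v * g v)%C w (a * g w + f w * b)%C.
Proof.
  intros Hf Hg eps He.
  set (A := Cmod a). set (F := Cmod (f w)). set (Gw := Cmod (g w)).
  assert (HA : 0 <= A) by apply Cmod_ge_0. assert (HF : 0 <= F) by apply Cmod_ge_0.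
  assert (HG : 0 <= Gw) by apply Cmod_ge_0.
  destruct (Hf (eps / (3 * (Gw + 1)))) as [d1 [Hd1 B1]]; [apply Rdiv_lt_0_compat; lra|].
  destruct (Hg (eps / (3 * (F + 1)))) as [d2 [Hd2 B2]]; [apply Rdiv_lt_0_compat; lra|].
  destruct (cdiff_ccont g w b Hg (Rmin 1 (eps / (3 * (A + 1))))) as [d3 [Hd3 B3]].
  { apply Rmin_pos; [lra|]. apply Rdiv_lt_0_compat; lra. }
  exists (Rmin d1 (Rmin d2 d3)). split; [repeat apply Rmin_pos; auto|].
  intros v Hv.
  assert (Hv1 : Cmod (v - w) < d1) by (eapply Rlt_le_trans; [exact Hv|apply Rmin_l]).
  assert (Hv2 : Cmod (v - w) < d2) by (eapply Rlt_le_trans; [exact Hv|]; eapply Rle_trans; [apply Rmin_r|apply Rmin_l]).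
  assert (Hv3 : Cmod (v - w) < d3) by (eapply Rlt_le_trans; [exact Hv|]; eapply Rle_trans; [apply Rmin_r|apply Rmin_r]).
  specialize (B1 v Hv1). specialize (B2 v Hv2). specialize (B3 v Hv3).
  assert (B3a : Cmod (g v - g w) < 1) by (eapply Rlt_le_trans; [exact B3|apply Rmin_l]).
  assert (B3b : Cmod (g v - g w) < eps / (3 * (A + 1))) by (eapply Rlt_le_trans; [exact B3|apply Rmin_r]).
  assert (Hgv : Cmod (g v) <= Gw + 1).
  { replace (g v) with ((g v - g w) + g w)%C by ring. eapply Rle_trans; [apply Cmod_triangle|]. unfold Gw; lra. }
  replace (f v * g v - f w * g w - (a * g w + f w * b) * (v - w))%C with
    ((f v - f w - a * (v - w)) * g v + f w * (g v - g w - b * (v - w)) + a * (v - w) * (g v - g w))%C by ring.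
  set (D := Cmod (v - w)). assert (HD : 0 <= D) by apply Cmod_ge_0.
  eapply Rle_trans; [apply Cmod_triangle|].
  eapply Rle_trans; [apply Rplus_le_compat_r; apply Cmod_triangle|].
  rewrite !Cmod_mult. fold A F D.
  assert (T1 : Cmod (f v - f w - a * (v - w)) * Cmod (g v) <= eps / 3 * D).
  { apply Rle_trans with (eps / (3 * (Gw + 1)) * D * (Gw + 1)).
    - apply Rmult_le_compat; auto using Cmod_ge_0.
    - right. field. lra. }
  assert (T2 : F * Cmod (g v - g w - b * (v - w)) <= eps / 3 * D).
  { apply Rle_trans with ((F + 1) * (eps / (3 * (F + 1)) * D)).
    - apply Rmult_le_compat; auto using Cmod_ge_0; lra.
    - right. field. lra. }
  assert (T3 : A * D * Cmod (g v - g w) <= eps / 3 * D).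
  { apply Rle_trans with ((A + 1) * D * (eps / (3 * (A + 1)))).
    - apply Rmult_le_compat; auto using Cmod_ge_0; [nra| nra | lra].
    - right. field. lra. }
  lra.
Qed.

Lemma cdiff_ext_loc (f g : C -> C) (w l : C) (rho : R) :
  0 < rho -> (forall v, Cmod (v - w) < rho -> f v = g v) -> cdiff f w l -> cdiff g w l.
Proof.
  intros Hr Heq H eps He. destruct (H eps He) as [d [Hd B]].
  exists (Rmin d rho). split; [apply Rmin_pos; auto|].
  intros v Hv.
  assert (Hv1 : Cmod (v - w) < d) by (eapply Rlt_le_trans; [exact Hv|apply Rmin_l]).
  assert (Hv2 : Cmod (v - w) < rho) by (eapply Rlt_le_trans; [exact Hv|apply Rmin_r]).
  rewrite <- (Heq v Hv2), <- (Heq w); [apply B; auto|].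
  replace (w - w)%C with (RtoC 0) by ring. rewrite Cmod_0. lra.
Qed.

Definition Gf (f : C -> C) (w : C) : C :=
  if Ceq_dec w 0%C then cderiv f 0%C else (f w / w)%C.

Lemma cderiv_spec (f : C -> C) (z : C) :
  (exists l, cderivable_at f z l) -> cderivable_at f z (cderiv f z).
Proof.
  intros H. unfold cderiv. apply (epsilon_spec (inhabits (RtoC 0)) (fun l => cderivable_at f z l)). exact H.
Qed.

Lemma an_cdiff (f : C -> C) (z : C) : analytic_on_disc f -> Cmod z < 1 -> cdiff f z (cderiv f z).
Proof.
  intros Hf Hz. apply cdiff_iff. apply cderiv_spec. apply Hf. exact Hz.
Qed.

Lemma Gf_diff (f : C -> C) : analytic_on_disc f ->
  forall w, Cmod w < 1 -> w <> 0%C -> exists l, cdiff (Gf f) w l.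
Proof.
  intros Hf w Hw Hw0. eexists.
  apply (cdiff_ext_loc (fun v => f v * / v)%C _ _ _ (Cmod w)).
  - apply Cmod_gt_0; auto.
  - intros v Hv. unfold Gf. destruct (Ceq_dec v 0%C) as [E|E].
    + exfalso. subst v. replace (0 - w)%C with (- w)%C in Hv by ring. rewrite Cmod_opp in Hv. lra.
    + reflexivity.
  - apply cdiff_mult; [apply an_cdiff; auto | apply cdiff_inv; auto].
Qed.

Lemma Gf_cont (f : C -> C) : analytic_on_disc f -> f 0%C = 0%C ->
  forall w, Cmod w < 1 -> ccont (Gf f) w.
Proof.
  intros Hf Hf0 w Hw.
  destruct (Ceq_dec w 0%C) as [E|E].
  - subst w. intros eps He.
    destruct (an_cdiff f 0%C Hf Hw (eps / 2) ltac:(lra)) as [d [Hd B]].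
    exists d. split; auto. intros v Hv.
    unfold Gf at 2. destruct (Ceq_dec 0%C 0%C) as [_|N]; [|exfalso; auto].
    unfold Gf. destruct (Ceq_dec v 0%C) as [Ev|Ev].
    + replace (cderiv f 0%C - cderiv f 0%C)%C with (RtoC 0) by ring. rewrite Cmod_0. lra.
    + specialize (B v Hv). rewrite Hf0 in B.
      replace (f v / v - cderiv f 0%C)%C with ((f v - 0 - cderiv f 0%C * (v - 0)) / v)%C by (field; auto).
      assert (Hp : 0 < Cmod v) by (apply Cmod_gt_0; auto).
      rewrite Cmod_div by auto.
      replace (v - 0)%C with v in B by ring.
      apply (Rmult_lt_reg_r (Cmod v)); auto. unfold Rdiv. rewrite Rmult_assoc, Rinv_l, Rmult_1_r by lra.
      replace (v - 0)%C with v by ring. nra.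
  - destruct (Gf_diff f Hf w Hw E) as [l Hl]. exact (cdiff_ccont _ _ _ Hl).
Qed.

Lemma Alex_eq (f : C -> C) : Alexander f = (fun z => seg (Gf f) 0%C z).
Proof.
  apply functional_extensionality. intros z. unfold Alexander, seg.
  apply (RInt_ext (V:=C_R_CompleteNormedModule)). intros t Ht.
  rewrite Rmin_left, Rmax_right in Ht by lra.
  unfold segf, Gf. destruct (Ceq_dec z 0%C) as [Ez|Ez].
  - subst z. destruct (Ceq_dec _ 0%C); ceq; ring.
  - destruct (Ceq_dec (0 + RtoC t * (z - 0))%C 0%C) as [E|E].
    + exfalso. replace (0 + RtoC t * (z - 0))%C with (RtoC t * z)%C in E by ring.
      apply (f_equal Cmod) in E. rewrite Cmod_mult, Cmod_R, Cmod_0 in E.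
      assert (0 < Cmod z) by (apply Cmod_gt_0; auto). rewrite Rabs_pos_eq in E by lra. nra.
    + replace (0 + RtoC t * (z - 0))%C with (RtoC t * z)%C by ring. ceq. ring.
Qed.

Lemma Alex_deriv (f : C -> C) : analytic_on_disc f -> f 0%C = 0%C ->
  forall z, Cmod z < 1 -> cderivable_at (Alexander f) z (Gf f z) /\ cderiv (Alexander f) z = Gf f z.
Proof.
  intros Hf Hf0 z Hz.
  assert (H : cderivable_at (Alexander f) z (Gf f z)).
  { rewrite Alex_eq. apply cdiff_iff. apply prim_deriv; auto.
    - apply Gf_cont; auto.
    - apply Gf_diff; auto. }
  split; auto.
  apply (cdiff_unique (Alexander f) z); apply cdiff_iff; auto.
  apply cderiv_spec. eauto.
Qed.

Lemma Alex_0 (f : C -> C) : analytic_on_disc f -> f 0%C = 0%C -> Alexander f 0%C = 0%C.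
Proof.
  intros Hf Hf0. rewrite Alex_eq. apply seg_00. apply Gf_cont; auto.
Qed.

Lemma mvi (f : C -> C) (z : C) (B : R) (D : R -> C) :
  (forall t, 0 <= t <= 1 -> cdiff f (RtoC t * z)%C (D t) /\ Cmod (D t) <= B) ->
  Cmod (f z - f 0%C) <= Cmod z * B.
Proof.
  intros HD.
  assert (HB : 0 <= B) by (destruct (HD 0 ltac:(lra)) as [_ H]; generalize (Cmod_ge_0 (D 0)); lra).
  set (u := Cconj (f z - f 0%C)).
  set (psi := fun t => Re (u * f (RtoC t * z))%C).
  assert (Hder : forall t, 0 <= t <= 1 -> derivable_pt_lim psi t (Re (u * D t * z))%C).
  { intros t Ht eps He.
    destruct (HD t Ht) as [Hc _].
    set (K := Cmod u * Cmod z + 1).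
    assert (HK : 0 < K) by (unfold K; generalize (Cmod_ge_0 u) (Cmod_ge_0 z); nra).
    destruct (Hc (eps / (2 * K))) as [dc [Hdc Bc]]; [apply Rdiv_lt_0_compat; lra|].
    assert (Hdp : 0 < dc / (Cmod z + 1)) by (apply Rdiv_lt_0_compat; generalize (Cmod_ge_0 z); lra).
    exists (mkposreal _ Hdp). intros h Hh0 Hh. simpl in Hh.
    set (w := (RtoC (t + h) * z)%C).
    assert (Ew : (w - RtoC t * z)%C = (RtoC h * z)%C) by (unfold w; rewrite RtoC_plus; ring).
    assert (Hwd : Cmod (w - RtoC t * z) < dc).
    { rewrite Ew, Cmod_mult, Cmod_R.
      assert (0 <= Cmod z) by apply Cmod_ge_0.
      apply Rle_lt_trans with (Rabs h * (Cmod z + 1)); [generalize (Rabs_pos h); nra|].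
      apply Rlt_le_trans with (dc / (Cmod z + 1) * (Cmod z + 1)); [apply Rmult_lt_compat_r; lra|].
      right; field; lra. }
    specialize (Bc w Hwd). rewrite Ew in Bc.
    assert (E : psi (t + h) - psi t - h * Re (u * D t * z)%C
                = Re (u * (f w - f (RtoC t * z)%C - D t * (RtoC h * z)))%C).
    { unfold psi. fold w. generalize (f w) (f (RtoC t * z)%C) (D t). intros A0 B0 Dt.
      destruct u, A0, B0, Dt, z; simpl; ring. }
    assert (Hreb : Rabs (psi (t + h) - psi t - h * Re (u * D t * z)%C) <= Cmod u * (eps / (2 * K) * (Rabs h * Cmod z))).
    { rewrite E. eapply Rle_trans; [apply re_le_Cmod|]. rewrite Cmod_mult.
      apply Rmult_le_compat_l; [apply Cmod_ge_0|]. rewrite Cmod_mult, Cmod_R in Bc. exact Bc. }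
    replace ((psi (t + h) - psi t) / h - Re (u * D t * z)%C)
      with ((psi (t + h) - psi t - h * Re (u * D t * z)%C) / h) by (field; auto).
    unfold Rdiv. rewrite Rabs_mult, Rabs_inv.
    assert (Hh' : 0 < Rabs h) by (apply Rabs_pos_lt; auto).
    apply Rle_lt_trans with (Cmod u * (eps / (2 * K) * (Rabs h * Cmod z)) * / Rabs h).
    { apply Rmult_le_compat_r; [left; apply Rinv_0_lt_compat; auto | exact Hreb]. }
    replace (Cmod u * (eps / (2 * K) * (Rabs h * Cmod z)) * / Rabs h) with (eps / 2 * (Cmod u * Cmod z / K)) by (field; lra).
    assert (Cmod u * Cmod z / K < 1).
    { apply (Rmult_lt_reg_r K); auto. unfold Rdiv. rewrite Rmult_assoc, Rinv_l, Rmult_1_r by lra. unfold K; lra. }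
    assert (0 <= Cmod u * Cmod z / K) by (apply Rdiv_le_0_compat; [apply Rmult_le_pos; apply Cmod_ge_0 | lra]).
    nra. }
  destruct (MVT_gen psi 0 1 (fun t => Re (u * D t * z))%C) as [c [Hc Hmv]].
  - intros x Hx. rewrite Rmin_left, Rmax_right in Hx by lra. apply is_derive_Reals. apply Hder. lra.
  - intros x Hx. rewrite Rmin_left, Rmax_right in Hx by lra. apply derivable_continuous_pt.
    exists (Re (u * D x * z))%C. apply Hder. exact Hx.
  - rewrite Rmin_left, Rmax_right in Hc by lra.
    unfold psi in Hmv. replace (RtoC 1 * z)%C with z in Hmv by ring.
    replace (RtoC 0 * z)%C with (RtoC 0) in Hmv by ring.
    assert (E1 : Re (u * f z)%C - Re (u * f (RtoC 0))%C = Cmod (f z - f 0%C) ^ 2).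
    { rewrite Cmod2_alt. unfold u. generalize (f z) (f (RtoC 0)). intros [] []. simpl. ring. }
    rewrite E1 in Hmv.
    assert (E2 := re_le_Cmod (u * D c * z)%C). rewrite !Cmod_mult in E2. unfold u in E2. rewrite Cmod_conj in E2.
    destruct (HD c Hc) as [_ HDc].
    set (X := Cmod (f z - f 0%C)) in *.
    assert (HX : 0 <= X) by apply Cmod_ge_0.
    assert (Hz : 0 <= Cmod z) by apply Cmod_ge_0.
    assert (Hle : X ^ 2 <= X * B * Cmod z).
    { rewrite Hmv. replace (1 - 0) with 1 by ring. rewrite Rmult_1_r. fold u in E2.
      eapply Rle_trans; [apply Rle_abs|]. eapply Rle_trans; [exact E2|].
      apply Rmult_le_compat_r; auto. apply Rmult_le_compat_l; auto. }
    destruct (Req_dec X 0) as [E0|E0]; [rewrite E0; nra|].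
    assert (0 < X) by lra.
    apply (Rmult_le_reg_l X); auto. simpl in Hle. nra.
Qed.

Lemma norm_props (alpha : R) (f : C -> C) :
  (exists M, forall z, in_disc z -> bloch_weight alpha f z <= M) ->
  (forall z, in_disc z -> bloch_weight alpha f z <= bloch_norm alpha f) /\
  (forall N, (forall z, in_disc z -> bloch_weight alpha f z <= N) -> bloch_norm alpha f <= N).
Proof.
  intros [M HM]. unfold bloch_norm.
  destruct (Lub_Rbar_correct (fun r => exists z, in_disc z /\ r = bloch_weight alpha f z)) as [Hub Hlub].
  assert (H0 : in_disc 0%C) by (unfold in_disc; rewrite Cmod_0; lra).
  assert (HlM := Hlub (Finite M) ltac:(intros x [z [Hz ->]]; simpl; apply HM; auto)).
  assert (Hx0 := Hub (bloch_weight alpha f 0%C) (ex_intro _ (RtoC 0) (conj H0 eq_refl))).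
  destruct (Lub_Rbar _) as [v| |]; simpl in *; try contradiction.
  split.
  - intros z Hz. apply (Hub (bloch_weight alpha f z) (ex_intro _ z (conj Hz eq_refl))).
  - intros N HN. apply (Hlub (Finite N)). intros x [z [Hz ->]]. simpl. apply HN; auto.
Qed.

Lemma rp_pos (x a : R) : 0 < Rpower x a.
Proof. unfold Rpower. apply exp_pos. Qed.

Lemma rp_1 (a : R) : Rpower 1 a = 1.
Proof. unfold Rpower. rewrite ln_1, Rmult_0_r. apply exp_0. Qed.

Lemma disc_pos (z : C) : Cmod z < 1 -> 0 < 1 - Cmod z ^ 2.
Proof. intros H. generalize (Cmod_ge_0 z). intros. simpl. nra. Qed.

Lemma Alex_weight (alpha : R) (f : C -> C) : 0 < alpha -> in_Bloch0 alpha f ->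
  forall z, in_disc z -> bloch_weight alpha (Alexander f) z <= bloch_norm alpha f.
Proof.
  intros Ha [[Hf HM] Hf0] z Hz.
  destruct (norm_props alpha f HM) as [Hup _].
  unfold bloch_weight. rewrite (proj2 (Alex_deriv f Hf Hf0 z Hz)).
  unfold Gf. destruct (Ceq_dec z 0%C) as [E|E].
  - subst z. apply (Hup 0%C Hz).
  - set (W := Rpower (1 - Cmod z ^ 2) alpha).
    assert (HW : 0 < W) by apply rp_pos.
    set (N := bloch_norm alpha f).
    assert (Hzp : 0 < Cmod z) by (apply Cmod_gt_0; auto).
    assert (Hmv : Cmod (f z - f 0%C) <= Cmod z * (N / W)).
    { apply (mvi f z (N / W) (fun t => cderiv f (RtoC t * z)%C)).
      intros t Ht.
      assert (Htz : Cmod (RtoC t * z)%C <= Cmod z) by (rewrite Cmod_mult, Cmod_R, Rabs_pos_eq by lra; nra).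
      assert (Hd : in_disc (RtoC t * z)%C) by (unfold in_disc in *; lra).
      split; [apply an_cdiff; auto|].
      assert (Hw := Hup _ Hd). unfold bloch_weight in Hw.
      assert (Hmono : W <= Rpower (1 - Cmod (RtoC t * z)%C ^ 2) alpha).
      { apply Rle_Rpower_l; [lra|]. split; [apply disc_pos; auto|].
        generalize (Cmod_ge_0 (RtoC t * z)%C). simpl. nra. }
      apply (Rmult_le_reg_l W); auto. unfold Rdiv. rewrite <- Rmult_assoc, (Rmult_comm W (N)), Rmult_assoc, Rinv_r, Rmult_1_r by lra.
      eapply Rle_trans; [|exact Hw]. apply Rmult_le_compat_r; [apply Cmod_ge_0 | exact Hmono]. }
    rewrite Hf0 in Hmv. replace (f z - 0)%C with (f z) in Hmv by ring.
    rewrite Cmod_div by auto.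
    apply (Rmult_le_reg_r (Cmod z)); auto.
    replace (W * (Cmod (f z) / Cmod z) * Cmod z) with (W * Cmod (f z)) by (field; lra).
    apply (Rmult_le_compat_l W) in Hmv; [|lra].
    eapply Rle_trans; [exact Hmv|]. right. field. lra.
Qed.

Lemma is_RInt_cmul (g : R -> C) (a b : R) (I c : C) :
  is_RInt (V:=C_R_CompleteNormedModule) g a b I ->
  is_RInt (V:=C_R_CompleteNormedModule) (fun t => (c * g t)%C) a b (c * I)%C.
Proof.
  intros H.
  assert (H1 := is_RInt_fct_extend_fst (U:=R_NormedModule) (V:=R_NormedModule) g a b I H).
  assert (H2 := is_RInt_fct_extend_snd (U:=R_NormedModule) (V:=R_NormedModule) g a b I H).
  destruct c as [c1 c2].
  apply (is_RInt_fct_extend_pair (U:=R_NormedModule) (V:=R_NormedModule)).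
  - simpl.
    apply (is_RInt_minus (V:=R_NormedModule) (fun t => c1 * fst (g t)) (fun t => c2 * snd (g t)));
      apply (is_RInt_scal (V:=R_NormedModule)); assumption.
  - simpl.
    apply (is_RInt_plus (V:=R_NormedModule) (fun t => c1 * snd (g t)) (fun t => c2 * fst (g t)));
      apply (is_RInt_scal (V:=R_NormedModule)); assumption.
Qed.

Lemma Alex_is_RInt (f : C -> C) (z : C) : analytic_on_disc f -> f 0%C = 0%C -> in_disc z ->
  is_RInt (V:=C_R_CompleteNormedModule) (fun t => (f (RtoC t * z) / (RtoC t * z) * z)%C) 0 1 (Alexander f z).
Proof.
  intros Hf Hf0 Hz.
  assert (Hex : ex_RInt (V:=C_R_CompleteNormedModule) (fun t => (f (RtoC t * z) / (RtoC t * z) * z)%C) 0 1).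
  { apply (ex_RInt_ext (segf (Gf f) 0%C z)).
    - intros t Ht. rewrite Rmin_left, Rmax_right in Ht by lra.
      unfold segf, Gf. destruct (Ceq_dec z 0%C) as [Ez|Ez].
      + subst z. destruct (Ceq_dec _ 0%C); ceq; ring.
      + destruct (Ceq_dec (0 + RtoC t * (z - 0))%C 0%C) as [E|E].
        * exfalso. replace (0 + RtoC t * (z - 0))%C with (RtoC t * z)%C in E by ring.
          apply (f_equal Cmod) in E. rewrite Cmod_mult, Cmod_R, Cmod_0 in E.
          assert (0 < Cmod z) by (apply Cmod_gt_0; auto). rewrite Rabs_pos_eq in E by lra. nra.
        * replace (0 + RtoC t * (z - 0))%C with (RtoC t * z)%C by ring. ceq. ring.
    - apply ex_seg. apply (segc (Gf f) (Cmod z)); auto.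
      + apply Gf_cont; auto.
      + rewrite Cmod_0. apply Cmod_ge_0.
      + lra. }
  apply (RInt_correct (V:=C_R_CompleteNormedModule)) in Hex. exact Hex.
Qed.

Lemma Alex_lin (f g : C -> C) (a b z : C) :
  analytic_on_disc f -> f 0%C = 0%C -> analytic_on_disc g -> g 0%C = 0%C -> in_disc z ->
  Alexander (fun w => a * f w + b * g w)%C z = (a * Alexander f z + b * Alexander g z)%C.
Proof.
  intros Hf Hf0 Hg Hg0 Hz.
  assert (H1 := is_RInt_cmul _ _ _ _ a (Alex_is_RInt f z Hf Hf0 Hz)).
  assert (H2 := is_RInt_cmul _ _ _ _ b (Alex_is_RInt g z Hg Hg0 Hz)).
  assert (H := is_RInt_plus (V:=C_R_CompleteNormedModule) _ _ 0 1 _ _ H1 H2).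
  unfold Alexander at 1. apply (is_RInt_unique (V:=C_R_CompleteNormedModule)).
  eapply is_RInt_ext; [|exact H].
  intros t _. change (plus ?x ?y) with (x + y)%C. cbv beta. ceq. unfold Cdiv. ring.
Qed.

Lemma id_cderiv (z : C) : cderiv (fun w => w) z = 1%C.
Proof.
  assert (Hd : cdiff (fun w => w) z 1%C).
  { intros eps He. exists 1. split; [lra|]. intros w _.
    replace (w - z - 1 * (w - z))%C with (RtoC 0) by ring. rewrite Cmod_0.
    generalize (Cmod_ge_0 (w - z)). nra. }
  apply (cdiff_unique (fun w => w) z); auto.
  apply cdiff_iff. apply cderiv_spec. exists 1%C. apply cdiff_iff. exact Hd.
Qed.

Lemma id_analytic : analytic_on_disc (fun w => w).
Proof.
  intros z _. exists 1%C. apply cdiff_iff.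
  intros eps He. exists 1. split; [lra|]. intros w _.
  replace (w - z - 1 * (w - z))%C with (RtoC 0) by ring. rewrite Cmod_0.
  generalize (Cmod_ge_0 (w - z)). nra.
Qed.

Lemma id_weight (alpha : R) (z : C) : 0 < alpha -> in_disc z -> bloch_weight alpha (fun w => w) z <= 1.
Proof.
  intros Ha Hz. unfold bloch_weight. rewrite id_cderiv.
  replace (Cmod 1%C) with 1 by (rewrite Cmod_R, Rabs_pos_eq; lra).
  rewrite Rmult_1_r. apply Rle_trans with (Rpower 1 alpha); [|rewrite rp_1; lra].
  apply Rle_Rpower_l; [lra|].
  split; [apply disc_pos; auto|]. generalize (Cmod_ge_0 z). simpl. nra.
Qed.

Lemma id_bloch0 (alpha : R) : 0 < alpha -> in_Bloch0 alpha (fun w => w).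
Proof.
  intros Ha. split; [split|].
  - apply id_analytic.
  - exists 1. intros z Hz. apply id_weight; auto.
  - reflexivity.
Qed.

Lemma id_norm (alpha : R) : 0 < alpha -> bloch_norm alpha (fun w => w) = 1.
Proof.
  intros Ha.
  assert (HM : exists M, forall z, in_disc z -> bloch_weight alpha (fun w => w) z <= M)
    by (exists 1; intros z Hz; apply id_weight; auto).
  destruct (norm_props alpha (fun w => w) HM) as [Hup Hlub].
  apply Rle_antisym.
  - apply Hlub. intros z Hz. apply id_weight; auto.
  - assert (H0 : in_disc 0%C) by (unfold in_disc; rewrite Cmod_0; lra).
    eapply Rle_trans; [|apply (Hup _ H0)].
    unfold bloch_weight. rewrite id_cderiv, Cmod_0.
    replace (1 - 0 ^ 2) with 1 by ring. rewrite rp_1.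
    rewrite Cmod_R, Rabs_pos_eq; lra.
Qed.

Lemma Alex_id : Alexander (fun w => w) = (fun w => w).
Proof.
  apply functional_extensionality. intros z. unfold Alexander.
  transitivity (@RInt C_R_CompleteNormedModule (fun _ => z) 0 1).
  - apply (RInt_ext (V:=C_R_CompleteNormedModule)). intros t Ht.
    rewrite Rmin_left, Rmax_right in Ht by lra.
    destruct (Ceq_dec z 0%C) as [Ez|Ez].
    + subst z. ceq. ring.
    + assert (Hn : (RtoC t * z)%C <> 0%C).
      { apply Cmod_gt_0. rewrite Cmod_mult, Cmod_R, Rabs_pos_eq by lra.
        assert (0 < Cmod z) by (apply Cmod_gt_0; auto). nra. }
      ceq. field. split; auto. intro E. apply RtoC_inj in E. lra.
  - rewrite RInt_const. rewrite scalCR. replace (1 - 0) with 1 by ring. ring.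
Qed.

Theorem theorem2p5 (alpha : R) (halpha : 0 < alpha) :
  (* C_0 maps B_alpha^0 into itself *)
  (forall f : C -> C, in_Bloch0 alpha f -> in_Bloch0 alpha (Alexander f)) /\
  (* C_0 is linear on B_alpha^0 (equality of functions on the disc) *)
  (forall (f g : C -> C) (a b : C), in_Bloch0 alpha f -> in_Bloch0 alpha g ->
     forall z : C, in_disc z ->
       Alexander (fun w => (a * f w + b * g w)%C) z
       = (a * Alexander f z + b * Alexander g z)%C) /\
  (* bounded with bound 1 *)
  (forall f : C -> C, in_Bloch0 alpha f ->
     bloch_norm alpha (Alexander f) <= bloch_norm alpha f) /\
  (* 1 is the least such bound, i.e. the operator norm equals 1 *)
  (forall c : R,
     (forall f : C -> C, in_Bloch0 alpha f ->
        bloch_norm alpha (Alexander f) <= c * bloch_norm alpha f) ->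
     1 <= c).
Proof.
  split; [|split; [|split]].
  - intros f Hb. destruct Hb as [[Hf HM] Hf0] eqn:Eb.
    split; [split|].
    + intros z Hz. exists (Gf f z). apply (Alex_deriv f Hf Hf0 z Hz).
    + exists (bloch_norm alpha f). intros z Hz. apply Alex_weight; auto.
    + apply Alex_0; auto.
  - intros f g a b [[Hf _] Hf0] [[Hg _] Hg0] z Hz. apply Alex_lin; auto.
  - intros f Hb.
    assert (HM : exists M, forall z, in_disc z -> bloch_weight alpha (Alexander f) z <= M).
    { exists (bloch_norm alpha f). intros z Hz. apply Alex_weight; auto. }
    destruct (norm_props alpha (Alexander f) HM) as [_ Hl].
    apply Hl. intros z Hz. apply Alex_weight; auto.
  - intros c Hc. specialize (Hc (fun w => w) (id_bloch0 alpha halpha)).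
    rewrite Alex_id, id_norm in Hc by auto. lra.
Qed.
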